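(* Let $J$ be a probability space, $(W^{(n)})_n$ a sequence of graphons on $J$ and $W$ a graphon on $J$ with $\|W^{(n)}-W\|_{\infty\to1}\to0$. Let $u^{(n)}(0)\in L^1(J)$ converge to $u(0)\in L^1(J)$ in $L^1$. Let $u^{(n)}(t)$ and $u(t)$ be the solutions of the Kuramoto graphon systems $\dot u_x=\int_J W^{(n)}(x,y)\sin(u_y-u_x)\,d\mu(y)$ and $\dot u_x=\int_J W(x,y)\sin(u_y-u_x)\,d\mu(y)$ with these initial conditions. Then for every $t\in\mathbb{R}$, $\lim_{n\to\infty}\|u^{(n)}(t)-u(t)\|_1=0$, and the convergence is uniform in $t$ on every compact interval $[-T,T]$.
   Context: A graphon on $J=(\Omega,\mathcal A,\mu)$ is a symmetric measurable function $\Omega\times\Omega\to[0,1]$. $\|K\|_{\infty\to1}=\sup_{\|h\|_{L^\infty}\le1}\int_J\big|\int_J K(x,y)h(y)\,d\mu(y)\big|\,d\mu(x)$. *)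

(* Defs.v *)
From HB Require Import structures.
From mathcomp Require Import all_boot all_order all_algebra.
From mathcomp Require Import all_classical all_reals all_analysis.
Set Implicit Arguments. Unset Strict Implicit. Unset Printing Implicit Defensive.
Import Order.TTheory GRing.Theory Num.Theory.
Import numFieldNormedType.Exports.
Local Open Scope classical_set_scope.
Local Open Scope ring_scope.

Definition graphon {d} {T : measurableType d} {R : realType} (W : T -> T -> R) : Prop :=
  [/\ measurable_fun setT (fun p : T * T => W p.1 p.2),
      (forall x y, W x y = W y x) &
      (forall x y, 0 <= W x y <= 1)].

Definition cutnorm_inf1 {d} {T : measurableType d} {R : realType}
  (mu : {measure set T -> \bar R}) (K : T -> T -> R) : \bar R :=
  ereal_sup [set (\int[mu]_x `| \int[mu]_y (K x y * h y)%:E |)%E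
            | h in [set h : T -> R | measurable_fun setT h /\ forall y, `|h y| <= 1]].

Definition kuramoto_field {d} {T : measurableType d} {R : realType}
  (mu : {measure set T -> \bar R}) (W : T -> T -> R) (v : T -> R) (x : T) : R :=
  fine (\int[mu]_y (W x y * sin (v y - v x))%:E).

Definition L1dist {d} {T : measurableType d} {R : realType}
  (mu : {measure set T -> \bar R}) (f g : T -> R) : \bar R :=
  (\int[mu]_x (`|f x - g x|)%:E)%E.

Definition kuramoto_solution {d} {T : measurableType d} {R : realType}
  (mu : {measure set T -> \bar R}) (W : T -> T -> R) (u : R -> T -> R) : Prop :=
  (forall t, mu.-integrable setT (fun x => (u t x)%:E)) /\
  (forall t, (L1dist mu (fun x => (u (t + h) x - u t x) / h)
                        (kuramoto_field mu W (u t))) @[h --> 0^']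
             --> 0%E).

(* Main.v *)
Require Import Defs.
From HB Require Import structures.
From mathcomp Require Import all_boot all_order all_algebra.
From mathcomp Require Import all_classical all_reals all_analysis.
From mathcomp Require Import ring lra measurable_realfun.
Import Order.TTheory GRing.Theory Num.Theory.
Import numFieldNormedType.Exports.
Local Open Scope classical_set_scope.
Local Open Scope ring_scope.

Section real_part.
Context {R : realType}.

Lemma sin_lip (a b : R) : `|sin a - sin b| <= `|a - b|.
Proof.
wlog ab : a b / a <= b.
  move=> H; case: (leP a b) => [/H//|/ltW/H]; by rewrite distrC [`|b - a|]distrC.
have [c _ E] := @MVT_segment R sin cos a b ab (fun x _ => is_derive_sin x)
  (continuous_subspaceT (@continuous_sin R)).
rewrite distrC E [`|a - b|]distrC normrM.
by rewrite ler_piMl // cos_max.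
Qed.

Lemma real_ind (P : R -> Prop) (b : R) : 0 <= b -> P 0 ->
  (forall t : R, 0 <= t < b -> (forall s : R, 0 <= s <= t -> P s) ->
     exists2 del : R, 0 < del & forall s : R, t <= s < t + del -> P s) ->
  (forall t : R, 0 < t <= b -> (forall s : R, 0 <= s < t -> P s) -> P t) ->
  P b.
Proof.
move=> b0 P0 Hr Hl.
pose S := [set t : R | 0 <= t <= b /\ forall s, 0 <= s <= t -> P s].
have S0 : S 0.
  split; first by rewrite lexx b0.
  by move=> s /andP[s0 s0']; have -> : s = 0 by apply/eqP; rewrite eq_le s0 s0'.
have hasS : has_sup S.
  split; first by exists 0.
  by exists b => t [/andP[_ ]].
set m := sup S.
have m0 : 0 <= m by apply: sup_upper_bound.
have mb : m <= b by apply: ge_sup; [exists 0|by move=> t [/andP[_]]].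
have below : forall s, 0 <= s < m -> P s.
  move=> s /andP[s0 sm].
  have ms0 : 0 < m - s by rewrite subr_gt0.
  have [t [_ Ht] st] := @sup_adherent _ S (m - s) ms0 hasS.
  by apply: Ht; rewrite s0 /=; rewrite opprB addrCA subrr addr0 in st; exact: ltW.
have Pm : P m.
  case: (leP m 0) => m0'.
    by have -> : m = 0 by apply/eqP; rewrite eq_le m0' m0.
  by apply: Hl; [rewrite m0' mb|].
have Sm : forall s, 0 <= s <= m -> P s.
  move=> s /andP[s0]; rewrite le_eqVlt => /orP[/eqP->//|sm].
  by apply: below; rewrite s0 sm.
case: (leP b m) => bm; first by have -> : b = m by apply/eqP; rewrite eq_le mb bm.
have [del del0 Hd] := Hr m (introT andP (conj m0 bm)) Sm.
pose e := Num.min del (b - m) / 2.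
have e0 : 0 < e by rewrite divr_gt0 // lt_min del0 subr_gt0 bm.
have elt : e < Num.min del (b - m).
  by rewrite /e ltr_pdivrMr // ltr_pMr ?lt_min ?del0 ?subr_gt0 ?bm // ltr1n.
have : S (m + e).
  split.
    rewrite addr_ge0 ?m0 ?ltW //=.
    have : e < b - m by apply: (lt_le_trans elt); rewrite ge_min lexx orbT.
    by move=> ?; clearbody e; lra.
  move=> s /andP[s0 sme]; case: (leP s m) => sm; first by apply: Sm; rewrite s0 sm.
  apply: Hd; rewrite ltW //=.
  by apply: (le_lt_trans sme); rewrite ltrD2l (lt_le_trans elt) // ge_min lexx.
move/sup_upper_bound => /(_ hasS); rewrite -/m => H.
have : m < m + e by rewrite ltrDl.
by move=> /lt_le_trans /(_ H); rewrite ltxx.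
Qed.
End real_part.

Section compare.
Context {R : realType}.
Lemma compare (g : R -> R) (c A : R) :
  0 <= c -> c < A -> g 0 <= A ->
  (forall (t eps : R), 0 < eps -> exists2 del : R, 0 < del &
     forall h : R, `|h| < del -> `|g (t + h) - g t| <= `|h| * (2 * g t + c + eps)) ->
  forall t : R, 0 <= t -> g t <= A * expR (4 * t).
Proof.
move=> c0 cA g0 Hg b b0.
have A0 : 0 < A by apply: le_lt_trans cA.
have Mge : forall s : R, 0 <= s -> A <= A * expR (4 * s).
  move=> s s0; rewrite ler_pMr //.
  have : expR 0 <= expR (4 * s) by rewrite ler_expR mulr_ge0.
  by rewrite expR0.
apply: (@real_ind R (fun s => g s <= A * expR (4 * s)) b b0).
- by rewrite mulr0 expR0 mulr1.
- move=> t /andP[t0 tb] Ht.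
  have Pt : g t <= A * expR (4 * t) by apply: Ht; rewrite t0 lexx.
  have cA0 : 0 < A - c by rewrite subr_gt0.
  have [del del0 Hd] := Hg t (A - c) cA0.
  exists del => // s /andP[ts sd].
  have := Hd (s - t); rewrite addrCA subrr addr0.
  rewrite ger0_norm ?subr_ge0 //.
  have -> : 4 * s = 4 * t + 4 * (s - t) by ring.
  rewrite expRD.
  have := expR_ge1Dx (4 * (s - t)).
  have := Mge t t0.
  have : 0 <= s - t by rewrite subr_ge0.
  have : s - t < del by lra.
  move: Pt.
  move: (s - t) (expR (4 * (s - t))) (expR (4 * t)) => h E4h E4t.
  move=> Pt hd h0 AM E1 /(_ hd) /ler_normlP [_ H].
  rewrite mulrA; move: Pt AM; move: (A * E4t) => M Pt AM.
  have M0 : 0 <= M := le_trans (ltW A0) AM.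
  have p1 : 0 <= h * (M - g t) by rewrite mulr_ge0 // subr_ge0.
  have p2 : 0 <= h * (M - A) by rewrite mulr_ge0 // subr_ge0.
  have p3 : 0 <= M * (E4h - (1 + 4 * h)) by rewrite mulr_ge0 // subr_ge0.
  have p4 : 0 <= h * M by rewrite mulr_ge0.
  lra.
- move=> t /andP[t0 tb] Ht.
  apply/ler_addgt0Pr => e e0.
  have [del del0 Hd] := Hg t 1 ltr01.
  pose K := `|2 * g t + c + 1| + 1.
  have K0 : 0 < K by rewrite ltr_pwDr ?normr_ge0.
  pose h := Num.min (Num.min del t) (e / K) / 2.
  have h0 : 0 < h by rewrite divr_gt0 // !lt_min del0 t0 divr_gt0.
  have hm : h < Num.min (Num.min del t) (e / K).
    by rewrite /h ltr_pdivrMr // ltr_pMr ?ltr1n // !lt_min del0 t0 divr_gt0.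
  move: hm; rewrite !lt_min => /andP[/andP[hd ht] he].
  have := Hd (- h); rewrite normrN gtr0_norm // => /(_ hd) /ler_normlP [H _].
  have : g (t - h) <= A * expR (4 * (t - h)) by apply: Ht; lra.
  have : expR (4 * (t - h)) <= expR (4 * t) by rewrite ler_expR; lra.
  have : 2 * g t + c + 1 <= K by rewrite /K; apply: le_trans (ler_norm _) _; lra.
  have : h * K < e by rewrite -ltr_pdivlMr.
  clearbody h K.
  move: (expR (4 * (t - h))) (expR (4 * t)) => E1 E2.
  nra.
Qed.

Lemma compare_abs (g : R -> R) (c A : R) :
  0 <= c -> c < A -> g 0 <= A ->
  (forall (t eps : R), 0 < eps -> exists2 del : R, 0 < del &
     forall h : R, `|h| < del -> `|g (t + h) - g t| <= `|h| * (2 * g t + c + eps)) ->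
  forall t : R, g t <= A * expR (4 * `|t|).
Proof.
move=> c0 cA g0 Hg t.
case: (leP 0 t) => t0.
  by rewrite ger0_norm //; apply: (compare _ _ _ c0 cA g0 Hg).
pose g' := fun s => g (- s).
have Hg' : forall (t eps : R), 0 < eps -> exists2 del : R, 0 < del &
     forall h : R, `|h| < del -> `|g' (t + h) - g' t| <= `|h| * (2 * g' t + c + eps).
  move=> s eps e0; have [del del0 Hd] := Hg (- s) eps e0.
  exists del => // h hd; rewrite /g' opprD -(normrN h); apply: Hd.
  by rewrite normrN.
have g0' : g' 0 <= A by rewrite /g' oppr0.
have := compare _ _ _ c0 cA g0' Hg' (- t).
rewrite /g' opprK ltr0_norm //; apply.
by rewrite oppr_ge0 ltW.
Qed.
End compare.

Section ptstep.
Context {R : realType}.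
Lemma pt_step (A A' B B' Fa Fb h : R) : h != 0 ->
  `|A' - B'| <= `|A - B| + `|h| * (`|Fa - Fb| + `|(A' - A) / h - Fa| + `|(B' - B) / h - Fb|) /\
  `|A - B| <= `|A' - B'| + `|h| * (`|Fa - Fb| + `|(A' - A) / h - Fa| + `|(B' - B) / h - Fb|).
Proof.
move=> h0.
set qa := (A' - A) / h; set qb := (B' - B) / h.
have eA : A' = A + h * qa by rewrite /qa mulrC divfK // addrC subrK.
have eB : B' = B + h * qb by rewrite /qb mulrC divfK // addrC subrK.
pose X := (qa - Fa) - (qb - Fb) + (Fa - Fb).
have E : A' - B' = (A - B) + h * X by rewrite eA eB /X; ring.
have nX : `|X| <= `|Fa - Fb| + `|qa - Fa| + `|qb - Fb|.
  rewrite /X; apply: le_trans (ler_normD _ _) _.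
  have := ler_normB (qa - Fa) (qb - Fb); lra.
have hX : `|h * X| <= `|h| * (`|Fa - Fb| + `|qa - Fa| + `|qb - Fb|).
  by rewrite normrM ler_wpM2l.
split.
  by rewrite E; apply: le_trans (ler_normD _ _) _; lra.
have E' : A - B = (A' - B') - h * X by rewrite E; ring.
by rewrite E'; apply: le_trans (ler_normB _ _) _; lra.
Qed.
End ptstep.

Section s.
Context {R : realType}.
Lemma near0_ext (f : R -> \bar R) (eps : R) : 0 < eps ->
  f x @[x --> 0^'] --> 0%E ->
  exists2 del : R, 0 < del & forall h : R, h != 0 -> `|h| < del -> (f h < eps%:E)%E.
Proof.
move=> e0 /fine_cvgP [Hfin Hc].
have Hn := (cvgr0Pnorm_lt _).1 Hc eps e0.
have H : \forall h \near 0^', (f h < eps%:E)%E.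
  apply: filterS2 Hfin (Hn _) => h /= fh hn.
  by rewrite -(fineK fh) lte_fin; apply: le_lt_trans hn; exact: ler_norm.
move: H; rewrite near_withinE => /nbhs_ballP [del /= del0 Hd].
exists del => // h h0 hd; apply: Hd => //.
by rewrite /ball /= sub0r normrN.
Qed.
End s.

Section meas.
Context {d : measure_display} {T : measurableType d} {R : realType}.
Variable mu : probability T R.

Lemma meas_pint (k : T * T -> R) : measurable_fun setT k ->
  measurable_fun setT (fun x => fine (\int[mu]_y (k (x, y))%:E)).
Proof.
move=> mk.
have E : (fun x => (\int[mu]_y (k (x, y))%:E)%E) =
    (fun x => \int[mu]_y (EFin \o k)^\+ (x, y) - \int[mu]_y (EFin \o k)^\- (x, y))%E.
  apply/funext => x; rewrite integralE; congr (_ - _)%E;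
    by apply: eq_integral => y _; rewrite ?funeposE ?funenegE.
have mE : measurable_fun (T:=T) (U:=\bar R) setT (fun x => (\int[mu]_y (k (x, y))%:E)%E).
  rewrite E; apply: emeasurable_funB.
  - apply: measurable_fun_fubini_tonelli_F => //.
    by apply: measurable_funepos; by apply/measurable_EFinP.
  - apply: measurable_fun_fubini_tonelli_F => //.
    by apply: measurable_funeneg; by apply/measurable_EFinP.
exact: (measurableT_comp (measurable_realfun.fine_measurable measurableT) mE).
Qed.

Lemma muT : (mu : {measure set T -> \bar R}) setT = 1%E.
Proof. exact: probability_setT. Qed.

Lemma int_bdd (f : T -> R) (M : R) : measurable_fun setT f ->
  (forall x, `|f x| <= M) -> mu.-integrable setT (EFin \o f).
Proof.
move=> mf fM; apply: measurable_bounded_integrable => //.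
  by apply: le_lt_trans (probability_le1 mu measurableT) _; rewrite ltry.
exists M; split; first exact: num_real.
by move=> N MN x _; apply: le_trans (fM x) (ltW MN).
Qed.

Lemma msin (f : T -> R) : measurable_fun setT f -> measurable_fun setT (fun x => sin (f x)).
Proof. by move=> mf; apply: measurableT_comp mf; apply: continuous_measurable_fun; exact: continuous_sin. Qed.

Lemma mcos (f : T -> R) : measurable_fun setT f -> measurable_fun setT (fun x => cos (f x)).
Proof. by move=> mf; apply: measurableT_comp mf; apply: continuous_measurable_fun; exact: continuous_cos. Qed.

Lemma graphon_sec (W : T -> T -> R) x : graphon W -> measurable_fun setT (W x).
Proof.
case=> mW _ _.
exact: (measurable_fun_pair2 x mW).
Qed.


Lemma int_abs (f : T -> R) : mu.-integrable setT (EFin \o f) ->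
  mu.-integrable setT (EFin \o (fun y => `|f y|)).
Proof.
move=> /integrable_abse H.
by apply: eq_integrable H => // y _.
Qed.

Lemma intB (f g : T -> R) : mu.-integrable setT (EFin \o f) -> mu.-integrable setT (EFin \o g) ->
  mu.-integrable setT (EFin \o (fun y => f y - g y)).
Proof.
move=> hf hg; have := integrableB measurableT hf hg.
by apply: eq_integrable => // y _ /=; rewrite EFinB.
Qed.

Lemma intD (f g : T -> R) : mu.-integrable setT (EFin \o f) -> mu.-integrable setT (EFin \o g) ->
  mu.-integrable setT (EFin \o (fun y => f y + g y)).
Proof.
move=> hf hg; have := integrableD measurableT hf hg.
by apply: eq_integrable => // y _ /=; rewrite EFinD.
Qed.

Lemma intZ (k : R) (f : T -> R) : mu.-integrable setT (EFin \o f) ->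
  mu.-integrable setT (EFin \o (fun y => k * f y)).
Proof.
move=> hf; have := integrableZl measurableT k hf.
by apply: eq_integrable => // y _ /=; rewrite EFinM.
Qed.

Lemma mul_le (a b p q : R) : `|a| <= p -> `|b| <= q -> `|a * b| <= p * q.
Proof. by move=> ha hb; rewrite normrM ler_pM. Qed.

Lemma gW_le1 (W : T -> T -> R) x y : graphon W -> `|W x y| <= 1.
Proof. by case=> _ _ Wb; have /andP[h1 h2] := Wb x y; rewrite ger0_norm. Qed.

Lemma gW_diff (W1 W2 : T -> T -> R) x y : graphon W1 -> graphon W2 -> `|W1 x y - W2 x y| <= 1 + 1.
Proof. by move=> g1 g2; apply: le_trans (ler_normB _ _) _; rewrite lerD ?gW_le1. Qed.

Lemma field_pt (W1 W2 : T -> T -> R) (v w : T -> R) x :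
  graphon W1 -> graphon W2 -> measurable_fun setT v -> measurable_fun setT w ->
  mu.-integrable setT (EFin \o (fun y => v y - w y)) ->
  `|kuramoto_field mu W1 v x - kuramoto_field mu W2 w x| <=
   `|\int[mu]_y ((W1 x y - W2 x y) * sin (v y))|
   + `|\int[mu]_y ((W1 x y - W2 x y) * cos (v y))|
   + \int[mu]_y `|v y - w y| + `|v x - w x|.
Proof.
move=> gW1 gW2 mv mw ivw.
have [_ _ W1b] := gW1; have [_ _ W2b] := gW2.
have m1 := graphon_sec W1 x gW1; have m2 := graphon_sec W2 x gW2.
have mvx : measurable_fun setT (fun y => v y - v x) by apply: measurable_funB.
have mwx : measurable_fun setT (fun y => w y - w x) by apply: measurable_funB.
have ia : mu.-integrable setT (EFin \o (fun y => W1 x y * sin (v y - v x))).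
  apply: (int_bdd _ (1)); first by apply: measurable_funM => //; exact: msin.
  by move=> y; rewrite -[1]mulr1; apply: mul_le; [exact: gW_le1|exact: sin_max].
have ic : mu.-integrable setT (EFin \o (fun y => W2 x y * sin (w y - w x))).
  apply: (int_bdd _ (1)); first by apply: measurable_funM => //; exact: msin.
  by move=> y; rewrite -[1]mulr1; apply: mul_le; [exact: gW_le1|exact: sin_max].
have iKs : mu.-integrable setT (EFin \o (fun y => (W1 x y - W2 x y) * sin (v y))).
  apply: (int_bdd _ (1 + 1)); first by apply: measurable_funM; [apply: measurable_funB|exact: msin].
  by move=> y; rewrite -[1 + 1]mulr1; apply: mul_le; [exact: gW_diff|exact: sin_max].
have iKc : mu.-integrable setT (EFin \o (fun y => (W1 x y - W2 x y) * cos (v y))).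
  apply: (int_bdd _ (1 + 1)); first by apply: measurable_funM; [apply: measurable_funB|exact: mcos].
  by move=> y; rewrite -[1 + 1]mulr1; apply: mul_le; [exact: gW_diff|exact: cos_max].
have iDD : mu.-integrable setT (EFin \o (fun y => W2 x y * (sin (v y - v x) - sin (w y - w x)))).
  apply: (int_bdd _ (1 + 1)).
    by apply: measurable_funM => //; apply: measurable_funB; exact: msin.
  move=> y; rewrite -[1 + 1]mul1r; apply: mul_le; first exact: gW_le1.
  by apply: le_trans (ler_normB _ _) _; rewrite lerD ?sin_max.
have -> : kuramoto_field mu W1 v x - kuramoto_field mu W2 w x =
    cos (v x) * \int[mu]_y ((W1 x y - W2 x y) * sin (v y))
    - sin (v x) * \int[mu]_y ((W1 x y - W2 x y) * cos (v y))
    + \int[mu]_y (W2 x y * (sin (v y - v x) - sin (w y - w x))).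
  have -> : kuramoto_field mu W1 v x = \int[mu]_y (W1 x y * sin (v y - v x)) by [].
  have -> : kuramoto_field mu W2 w x = \int[mu]_y (W2 x y * sin (w y - w x)) by [].
  rewrite -RintegralB // -!RintegralZl // -RintegralB ?intZ // -RintegralD ?intB ?intZ //.
  apply: eq_Rintegral => y _; rewrite !sinB; ring.
have h3 : `|\int[mu]_y (W2 x y * (sin (v y - v x) - sin (w y - w x)))|
    <= \int[mu]_y `|v y - w y| + `|v x - w x|.
  apply: le_trans (le_normr_Rintegral _ _) _ => //.
  have ic0 : mu.-integrable setT (EFin \o (fun _ : T => `|v x - w x|)).
    by apply: (int_bdd _ `|v x - w x|) => // y; rewrite normr_id.
  apply: le_trans (@le_Rintegral _ _ _ mu setT _ (fun y => `|v y - w y| + `|v x - w x|) _ _ _ _) _ => //.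
  - by apply: int_abs.
  - refine (intD _ _ (int_abs _ ivw) ic0).
  - move=> y _; apply: le_trans (mul_le _ _ _ _ (gW_le1 _ x y gW2) (sin_lip _ _)) _.
    rewrite mul1r; have -> : v y - v x - (w y - w x) = (v y - w y) - (v x - w x) by ring.
    exact: ler_normB.
  rewrite RintegralD //; last exact: int_abs.
  by rewrite Rintegral_cst // muT /= mulr1.
move: h3; set I1 := \int[mu]_y ((W1 x y - W2 x y) * sin (v y)).
set I2 := \int[mu]_y ((W1 x y - W2 x y) * cos (v y)).
set I3 := \int[mu]_y (W2 x y * (sin (v y - v x) - sin (w y - w x))).
move=> h3.
have c1 : `|cos (v x) * I1| <= `|I1| by rewrite normrM ler_piMl ?cos_max.
have c2 : `|sin (v x) * I2| <= `|I2| by rewrite normrM ler_piMl ?sin_max.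
apply: le_trans (ler_normD _ _) _.
have := ler_normB (cos (v x) * I1) (sin (v x) * I2).
lra.
Qed.


Lemma intDr (f g : T -> R) : measurable_fun setT f -> measurable_fun setT g ->
  (forall x, 0 <= f x) -> (forall x, 0 <= g x) ->
  (\int[mu]_x (f x + g x)%:E = \int[mu]_x (f x)%:E + \int[mu]_x (g x)%:E)%E.
Proof.
move=> mf mg f0 g0.
under eq_integral do rewrite EFinD.
apply: ge0_integralD => //; by [move=> x _; rewrite lee_fin | apply/measurable_EFinP].
Qed.

Lemma mfield (W : T -> T -> R) v : graphon W -> measurable_fun setT v ->
  measurable_fun setT (kuramoto_field mu W v).
Proof.
case=> mW _ _ mv.
apply: (meas_pint (fun p => W p.1 p.2 * sin (v p.2 - v p.1))).
apply: measurable_funM => //.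
have ms : measurable_fun setT (fun p : T * T => v p.2 - v p.1).
  apply: measurable_funB; [exact: (measurableT_comp mv measurable_snd)|exact: (measurableT_comp mv measurable_fst)].
exact: (measurableT_comp (continuous_measurable_fun (@continuous_sin R)) ms).
Qed.

Lemma mKh (W1 W2 : T -> T -> R) (h : T -> R) : graphon W1 -> graphon W2 -> measurable_fun setT h ->
  measurable_fun setT (fun x => \int[mu]_y ((W1 x y - W2 x y) * h y)).
Proof.
case=> mW1 _ _ [mW2 _ _] mh.
apply: (meas_pint (fun p => (W1 p.1 p.2 - W2 p.1 p.2) * h p.2)).
apply: measurable_funM; first exact: measurable_funB.
exact: (measurableT_comp mh measurable_snd).
Qed.

Lemma cut_ub (W1 W2 : T -> T -> R) (h : T -> R) : graphon W1 -> graphon W2 ->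
  measurable_fun setT h -> (forall y, `|h y| <= 1) ->
  (\int[mu]_x (`|Rintegral mu setT (fun y => (W1 x y - W2 x y) * h y)|)%:E
     <= cutnorm_inf1 mu (fun x y => (W1 x y - W2 x y)%R))%E.
Proof.
move=> g1 g2 mh h1.
apply: ereal_sup_ubound; exists h => //.
apply: eq_integral => x _.
rewrite EFin_normr_Rintegral //.
apply: (int_bdd _ ((1 + 1) * 1)).
  apply: measurable_funM => //; apply: measurable_funB; exact: graphon_sec.
by move=> y; apply: mul_le => //; exact: gW_diff.
Qed.

Lemma field_L1 (W1 W2 : T -> T -> R) (v w : T -> R) : graphon W1 -> graphon W2 ->
  mu.-integrable setT (EFin \o v) -> mu.-integrable setT (EFin \o w) ->
  (L1dist mu (kuramoto_field mu W1 v) (kuramoto_field mu W2 w) <=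
   cutnorm_inf1 mu (fun x y => (W1 x y - W2 x y)%R)
   + cutnorm_inf1 mu (fun x y => (W1 x y - W2 x y)%R)
   + L1dist mu v w + L1dist mu v w)%E.
Proof.
move=> g1 g2 iv iw.
have mv : measurable_fun setT v by apply/measurable_EFinP; exact: measurable_int iv.
have mw : measurable_fun setT w by apply/measurable_EFinP; exact: measurable_int iw.
have ivw := intB _ _ iv iw.
have iavw := int_abs _ ivw.
pose I1 := fun x => Rintegral mu setT (fun y => (W1 x y - W2 x y) * sin (v y)).
pose I2 := fun x => Rintegral mu setT (fun y => (W1 x y - W2 x y) * cos (v y)).
pose c := Rintegral mu setT (fun y => `|v y - w y|).
have mI1 : measurable_fun setT I1 := mKh W1 W2 _ g1 g2 (msin _ mv).
have mI2 : measurable_fun setT I2 := mKh W1 W2 _ g1 g2 (mcos _ mv).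
have maI1 : measurable_fun setT (fun x => `|I1 x|) := measurableT_comp (@normr_measurable R setT) mI1.
have maI2 : measurable_fun setT (fun x => `|I2 x|) := measurableT_comp (@normr_measurable R setT) mI2.
have mvw : measurable_fun setT (fun x => `|v x - w x|).
  exact: (measurableT_comp (@normr_measurable R setT) (measurable_funB mv mw)).
have mF : measurable_fun setT (fun x => `|kuramoto_field mu W1 v x - kuramoto_field mu W2 w x|).
  exact: (measurableT_comp (@normr_measurable R setT) (measurable_funB (mfield _ _ g1 mv) (mfield _ _ g2 mw))).
rewrite /L1dist.
apply: le_trans (@ge0_le_integral _ _ _ mu setT measurableT _
   (fun x => (`|I1 x| + `|I2 x| + c + `|v x - w x|)%:E) _ _ _ _) _.
- by move=> x _; rewrite lee_fin.
- exact/measurable_EFinP.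
- apply/measurable_EFinP; apply: measurable_funD => //.
  by apply: measurable_funD => //; apply: measurable_funD.
- by move=> x _; rewrite lee_fin; apply: field_pt.
have c0 : 0 <= c by apply: Rintegral_ge0 => x _.
have m12 : measurable_fun setT (fun x => `|I1 x| + `|I2 x|) by apply: measurable_funD.
have m123 : measurable_fun setT (fun x => `|I1 x| + `|I2 x| + c) by apply: measurable_funD.
rewrite intDr //; try (by move=> x; rewrite !addr_ge0).
rewrite intDr //; try (by move=> x; rewrite !addr_ge0).
rewrite intDr //.
have -> : (\int[mu]_x c%:E = \int[mu]_x `|v x - w x|%:E)%E.
  rewrite integral_cst // muT mule1 /c /Rintegral fineK //.
  exact: (integrable_fin_num measurableT iavw).
apply: leeD => //; apply: leeD => //; apply: leeD.
- exact: cut_ub g1 g2 (msin _ mv) (fun y => sin_max _).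
- exact: cut_ub g1 g2 (mcos _ mv) (fun y => cos_max _).
Qed.

Lemma int4 (p1 p2 p3 p4 : T -> R) (k : R) :
  measurable_fun setT p1 -> measurable_fun setT p2 ->
  measurable_fun setT p3 -> measurable_fun setT p4 ->
  (forall x, 0 <= p1 x) -> (forall x, 0 <= p2 x) ->
  (forall x, 0 <= p3 x) -> (forall x, 0 <= p4 x) -> 0 <= k ->
  (\int[mu]_x (p1 x + k * (p2 x + p3 x + p4 x))%:E =
   \int[mu]_x (p1 x)%:E + k%:E * (\int[mu]_x (p2 x)%:E + \int[mu]_x (p3 x)%:E
      + \int[mu]_x (p4 x)%:E))%E.
Proof.
move=> m1 m2 m3 m4 h1 h2 h3 h4 k0.
have m23 : measurable_fun setT (fun x => p2 x + p3 x) by apply: measurable_funD.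
have m234 : measurable_fun setT (fun x => p2 x + p3 x + p4 x) by apply: measurable_funD.
rewrite intDr //; last first.
- by move=> x; rewrite mulr_ge0 // !addr_ge0.
- by apply: measurable_funM => //.
congr (_ + _)%E.
under eq_integral do rewrite EFinM.
rewrite ge0_integralZl //; last first.
- by move=> x _; rewrite lee_fin !addr_ge0.
- exact/measurable_EFinP.
by rewrite intDr // ?intDr //; move=> x; rewrite addr_ge0.
Qed.

Lemma mint (f : T -> R) : mu.-integrable setT (EFin \o f) -> measurable_fun setT f.
Proof. by move=> i; apply/measurable_EFinP; exact: measurable_int i. Qed.

Lemma field_le1 (W : T -> T -> R) v x : graphon W -> measurable_fun setT v ->
  `|kuramoto_field mu W v x| <= 1.
Proof.
move=> gW mv.
have ia : mu.-integrable setT (EFin \o (fun y => W x y * sin (v y - v x))).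
  apply: (int_bdd _ 1); first by apply: measurable_funM; [exact: graphon_sec|apply: msin; exact: measurable_funB].
  by move=> y; rewrite -[1]mulr1; apply: mul_le; [exact: gW_le1|exact: sin_max].
have -> : kuramoto_field mu W v x = \int[mu]_y (W x y * sin (v y - v x)) by [].
apply: le_trans (le_normr_Rintegral _ _) _ => //.
have ic1 : mu.-integrable setT (EFin \o (fun _ : T => 1 : R)).
  by apply: (int_bdd _ 1) => // y; rewrite normr1.
apply: le_trans (@le_Rintegral _ _ _ mu setT _ (fun _ => 1) _ _ _ _) _ => //.
- exact: int_abs.
- by move=> y _; rewrite -[1]mulr1; apply: mul_le; [exact: gW_le1|exact: sin_max].
by rewrite Rintegral_cst // muT mulr1.
Qed.

Lemma int_field (W : T -> T -> R) v : graphon W -> measurable_fun setT v ->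
  mu.-integrable setT (EFin \o kuramoto_field mu W v).
Proof.
move=> gW mv; apply: (int_bdd _ 1); first exact: mfield.
by move=> x; apply: field_le1.
Qed.

Lemma L1fin (f g : T -> R) : mu.-integrable setT (EFin \o f) ->
  mu.-integrable setT (EFin \o g) -> L1dist mu f g \is a fin_num.
Proof.
move=> hf hg; exact: (integrable_fin_num measurableT (int_abs _ (intB _ _ hf hg))).
Qed.

Lemma int_q (A A' : T -> R) (h : R) : mu.-integrable setT (EFin \o A) ->
  mu.-integrable setT (EFin \o A') ->
  mu.-integrable setT (EFin \o (fun x => (A' x - A x) / h)).
Proof.
move=> iA iA'; have := intZ h^-1 _ (intB _ _ iA' iA).
by apply: eq_integrable => // x _ /=; rewrite mulrC.
Qed.

Lemma mabsB (f g : T -> R) : measurable_fun setT f -> measurable_fun setT g ->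
  measurable_fun setT (fun x => `|f x - g x|).
Proof. by move=> mf mg; exact: (measurableT_comp (@normr_measurable R setT) (measurable_funB mf mg)). Qed.

Lemma step (Wa Wb : T -> T -> R) (A A' B B' : T -> R) (h : R) : h != 0 ->
  graphon Wa -> graphon Wb ->
  mu.-integrable setT (EFin \o A) -> mu.-integrable setT (EFin \o A') ->
  mu.-integrable setT (EFin \o B) -> mu.-integrable setT (EFin \o B') ->
  let S := (L1dist mu (kuramoto_field mu Wa A) (kuramoto_field mu Wb B)
            + L1dist mu (fun x => ((A' x - A x) / h)%R) (kuramoto_field mu Wa A)
            + L1dist mu (fun x => ((B' x - B x) / h)%R) (kuramoto_field mu Wb B))%E in
  (L1dist mu A' B' <= L1dist mu A B + `|h|%:E * S)%E /\
  (L1dist mu A B <= L1dist mu A' B' + `|h|%:E * S)%E.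
Proof.
move=> h0 ga gb iA iA' iB iB' S.
have mA := mint _ iA; have mA' := mint _ iA'; have mB := mint _ iB; have mB' := mint _ iB'.
have mFa := mfield _ _ ga mA; have mFb := mfield _ _ gb mB.
have mqa := mint _ (int_q _ _ h iA iA'); have mqb := mint _ (int_q _ _ h iB iB').
have m2 := mabsB _ _ mFa mFb.
have m3 := mabsB _ _ mqa mFa.
have m4 := mabsB _ _ mqb mFb.
have m1 := mabsB _ _ mA mB.
have m1' := mabsB _ _ mA' mB'.
have mR : forall p1 : T -> R, measurable_fun setT p1 ->
    measurable_fun setT (fun x => p1 x + `|h| * (`|kuramoto_field mu Wa A x - kuramoto_field mu Wb B x|
      + `|(A' x - A x) / h - kuramoto_field mu Wa A x| + `|(B' x - B x) / h - kuramoto_field mu Wb B x|)).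
  move=> p1 mp1; apply: measurable_funD => //; apply: measurable_funM => //.
  by apply: measurable_funD => //; apply: measurable_funD.
split.
- rewrite /L1dist; apply: le_trans (@ge0_le_integral _ _ _ mu setT measurableT _ _ _ _ _ _) _.
  + by move=> x _; rewrite lee_fin.
  + exact/measurable_EFinP.
  + exact/measurable_EFinP/(mR _ m1).
  + by move=> x _; rewrite lee_fin; exact: (pt_step _ _ _ _ _ _ _ h0).1.
  + by rewrite int4.
- rewrite /L1dist; apply: le_trans (@ge0_le_integral _ _ _ mu setT measurableT _ _ _ _ _ _) _.
  + by move=> x _; rewrite lee_fin.
  + exact/measurable_EFinP.
  + exact/measurable_EFinP/(mR _ m1').
  + by move=> x _; rewrite lee_fin; exact: (pt_step _ _ _ _ _ _ _ h0).2.
  + by rewrite int4.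
Qed.

Lemma local_bound (Wa Wb : T -> T -> R) (a b : R -> T -> R) :
  graphon Wa -> graphon Wb -> kuramoto_solution mu Wa a -> kuramoto_solution mu Wb b ->
  cutnorm_inf1 mu (fun x y => (Wa x y - Wb x y)%R) \is a fin_num ->
  forall t eps : R, 0 < eps -> exists2 del : R, 0 < del & forall h : R, `|h| < del ->
    `|fine (L1dist mu (a (t + h)) (b (t + h))) - fine (L1dist mu (a t) (b t))| <=
    `|h| * (2 * fine (L1dist mu (a t) (b t))
            + 2 * fine (cutnorm_inf1 mu (fun x y => (Wa x y - Wb x y)%R)) + eps).
Proof.
move=> ga gb [ia Ha] [ib Hb] cfin t eps e0.
have e20 : 0 < eps / 2 by rewrite divr_gt0.
have [da da0 Hda] := near0_ext _ _ e20 (Ha t).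
have [db db0 Hdb] := near0_ext _ _ e20 (Hb t).
exists (Num.min da db); first by rewrite lt_min da0 db0.
move=> h; rewrite lt_min => /andP[hda hdb].
have [->|h0] := eqVneq h 0.
  by rewrite addr0 subrr normr0 mul0r.
have := Hda h h0 hda; have := Hdb h h0 hdb.
have := step Wa Wb (a t) (a (t + h)) (b t) (b (t + h)) h h0 ga gb (ia t) (ia (t + h)) (ib t) (ib (t + h)).
have := field_L1 Wa Wb (a t) (b t) ga gb (ia t) (ib t).
have mat := mint _ (ia t); have mbt := mint _ (ib t).
have f0 : L1dist mu (a t) (b t) \is a fin_num := L1fin _ _ (ia t) (ib t).
have f1 : L1dist mu (a (t + h)) (b (t + h)) \is a fin_num := L1fin _ _ (ia (t + h)) (ib (t + h)).
have fF : L1dist mu (kuramoto_field mu Wa (a t)) (kuramoto_field mu Wb (b t)) \is a fin_num.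
  exact: L1fin _ _ (int_field _ _ ga mat) (int_field _ _ gb mbt).
have fa : L1dist mu (fun x : T => ((a (t + h) x - a t x) / h)%R) (kuramoto_field mu Wa (a t)) \is a fin_num.
  exact: L1fin _ _ (int_q _ _ h (ia t) (ia (t + h))) (int_field _ _ ga mat).
have fb : L1dist mu (fun x : T => ((b (t + h) x - b t x) / h)%R) (kuramoto_field mu Wb (b t)) \is a fin_num.
  exact: L1fin _ _ (int_q _ _ h (ib t) (ib (t + h))) (int_field _ _ gb mbt).
move: f0 f1 fF fa fb cfin.
move: (L1dist mu (a t) (b t)) (L1dist mu (a (t + h)) (b (t + h)))
  (L1dist mu (kuramoto_field mu Wa (a t)) (kuramoto_field mu Wb (b t)))
  (L1dist mu (fun x : T => ((a (t + h) x - a t x) / h)%R) (kuramoto_field mu Wa (a t)))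
  (L1dist mu (fun x : T => ((b (t + h) x - b t x) / h)%R) (kuramoto_field mu Wb (b t)))
  (cutnorm_inf1 mu (fun x y => (Wa x y - Wb x y)%R)) => L0 L1 LF La Lb C.
case: L0 => [L0||] //; case: L1 => [L1||] //; case: LF => [LF||] //;
  case: La => [La||] //; case: Lb => [Lb||] //; case: C => [C||] // => _ _ _ _ _ _ /=.
rewrite -!EFinD !lee_fin !lte_fin => HF [H1 H2] Hlb Hla.
have hn := normr_ge0 h.
have K : `|h| * (LF + La + Lb) <= `|h| * (2 * L0 + 2 * C + eps).
  by apply: ler_wpM2l => //; lra.
apply/ler_normlP; split; lra.
Qed.

Lemma cut_ge0 (W1 W2 : T -> T -> R) : graphon W1 -> graphon W2 ->
  (0 <= cutnorm_inf1 mu (fun x y => (W1 x y - W2 x y)%R))%E.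
Proof.
move=> g1 g2.
have h1 : forall y : T, `|(fun _ : T => 0 : R) y| <= 1 by move=> y; rewrite normr0.
apply: le_trans (cut_ub W1 W2 (fun _ => 0) g1 g2 (measurable_cst _) h1).
by apply: integral_ge0 => x _; rewrite lee_fin.
Qed.

End meas.

Section evs.
Context {R : realType}.
Lemma ev_small (f : nat -> \bar R) : f n @[n --> \oo] --> 0%E ->
  forall eps : R, 0 < eps -> \forall n \near \oo, f n \is a fin_num /\ fine (f n) < eps.
Proof.
move=> /fine_cvgP [Hfin Hc] eps e0.
have Hn := (cvgr0Pnorm_lt _).1 Hc eps e0.
apply: filterS2 Hfin (Hn _) => n fn hn; split => //.
by apply: le_lt_trans hn; exact: ler_norm.
Qed.
End evs.

Theorem corollary6p2 (d : measure_display) (T : measurableType d) (R : realType)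
  (mu : probability T R)
  (Wn : nat -> T -> T -> R) (W : T -> T -> R)
  (un : nat -> R -> T -> R) (u : R -> T -> R) :
  (forall n, graphon (Wn n)) -> graphon W ->
  cutnorm_inf1 mu (fun x y => Wn n x y - W x y) @[n --> \oo] --> 0%E ->
  (forall n, kuramoto_solution mu (Wn n) (un n)) ->
  kuramoto_solution mu W u ->
  L1dist mu (un n 0) (u 0) @[n --> \oo] --> 0%E ->
  (forall t : R, L1dist mu (un n t) (u t) @[n --> \oo] --> 0%E) /\
  (forall (Tm : R) (e : R), 0 < e ->
     \forall n \near \oo, forall t : R, `|t| <= Tm ->
        (L1dist mu (un n t) (u t) < e%:E)%E).
Proof.
move=> gWn gW Hcut Hsn Hs H0.
have Lfin : forall n t, L1dist mu (un n t) (u t) \is a fin_num.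
  by move=> n t; apply: L1fin; [exact: (Hsn n).1 | exact: Hs.1].
have Lge0 : forall n t, (0 <= L1dist mu (un n t) (u t))%E.
  by move=> n t; apply: integral_ge0 => x _; rewrite lee_fin.
have Unif : forall (Tm : R) (e : R), 0 < e ->
     \forall n \near \oo, forall t : R, `|t| <= Tm ->
        (L1dist mu (un n t) (u t) < e%:E)%E.
  move=> Tm e e0.
  pose K := expR (4 * `|Tm|).
  have K0 : 0 < K := expR_gt0 _.
  pose eta := e / (4 * K).
  have eta0 : 0 < eta by rewrite divr_gt0 // mulr_gt0.
  have eK : 4 * eta * K = e.
    by rewrite /eta; field; exact: lt0r_neq0.
  have := ev_small _ Hcut eta eta0; have := ev_small _ H0 eta eta0.
  move=> H0e Hce; apply: filterS2 H0e Hce => n [f0 g0lt] [fc clt] t tT.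
  pose g := fun s => fine (L1dist mu (un n s) (u s)).
  pose c := 2 * fine (cutnorm_inf1 mu (fun x y => (Wn n x y - W x y)%R)).
  have c0 : 0 <= c by rewrite mulr_ge0 // fine_ge0 // cut_ge0.
  have gpos : forall s, 0 <= g s by move=> s; rewrite fine_ge0.
  have Hloc := local_bound mu (Wn n) W (un n) u (gWn n) gW (Hsn n) Hs fc.
  have g0' : g 0 < eta by [].
  have cA : c < g 0 + c + eta by have := gpos 0; lra.
  have g0A : g 0 <= g 0 + c + eta by lra.
  have := compare_abs g c (g 0 + c + eta) c0 cA g0A Hloc t.
  have : expR (4 * `|t|) <= K.
    rewrite /K ler_expR; have : `|t| <= `|Tm| by apply: le_trans tT (ler_norm _).
    lra.
  have A0 : 0 <= g 0 + c + eta by have := gpos 0; lra.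
  have Alt : g 0 + c + eta < 4 * eta by rewrite /c; lra.
  move=> EK gt.
  rewrite -(fineK (Lfin n t)) lte_fin.
  have : (g 0 + c + eta) * expR (4 * `|t|) <= (g 0 + c + eta) * K by rewrite ler_wpM2l.
  have : (g 0 + c + eta) * K < 4 * eta * K by rewrite ltr_pM2r.
  rewrite eK -/(g t); lra.
split => // t.
apply/fine_cvgP; split; first by near=> n; exact: Lfin.
apply/cvgr0Pnorm_lt => e e0.
apply: filterS (Unif `|t| e e0) => n Hn.
have := Hn t (lexx _); rewrite -(fineK (Lfin n t)) lte_fin /= => lt.
by rewrite ger0_norm // fine_ge0.
Unshelve. all: by end_near.
Qed.
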